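(* Let $\mathbf m_1,\mathbf m_2,\mathbf m_3\in\mathbb R^3$ and $t_1,t_2,t_3\in\mathbb R$ with $\mathbf m_1\neq 0$, $\mathbf m_1\cdot\mathbf m_3=0$, and $\mathbf m_2,\mathbf m_3$ linearly independent, and let $$\mathbf A_1=\begin{bmatrix}\mathbf m_1^T & t_1\\ \mathbf 0^T & 1\end{bmatrix},\qquad \mathbf A_2=\begin{bmatrix}\mathbf m_2^T & t_2\\ \mathbf m_3^T & t_3\end{bmatrix}.$$ Then there exist unique reals $v>0$, $f>0$, $u$, unique unit vectors $\mathbf r_1,\mathbf r_2,\mathbf r_3\in\mathbb R^3$ with $\mathbf r_3\cdot\mathbf r_1=\mathbf r_3\cdot\mathbf r_2=0$, unique reals $t_1',t_2',t_3'$, and a unique scalar $c>0$ such that $$\mathbf A_1=\mathbf K_1\begin{bmatrix}\mathbf r_1^T & t_1'\\ \mathbf 0^T & 1\end{bmatrix},\qquad \mathbf A_2=c\,\mathbf K_2\begin{bmatrix}\mathbf r_2^T & t_2'\\ \mathbf r_3^T & t_3'\end{bmatrix},\qquad \mathbf K_1=\begin{bmatrix}1/v&0\\0&1\end{bmatrix},\ \mathbf K_2=\begin{bmatrix}f&u\\0&1\end{bmatrix}.$$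
   Context: A pair $(\mathbf A_1,\mathbf A_2)$ of $2\times4$ matrices represents the camera $\mathbf x\mapsto\big(\mathbf a_1^T\mathbf x/\mathbf a_2^T\mathbf x,\ \mathbf b_1^T\mathbf x/\mathbf b_2^T\mathbf x,\ 1\big)$ with $\mathbf a_i$, $\mathbf b_i$ the rows of $\mathbf A_1$, $\mathbf A_2$; when the second row of $\mathbf A_1$ is $(0,0,0,1)$ one slit (the null space of $\mathbf A_1$) lies in the plane at infinity, and the camera is called a (linear) pushbroom camera. *)

(* Defs.v *)
(* The reals are modelled by an arbitrary real closed field
   R : rcfType (covers the classical reals; square roots are needed). *)
From HB Require Import structures.
From mathcomp Require Import all_boot all_order all_algebra.
Set Implicit Arguments. Unset Strict Implicit. Unset Printing Implicit Defensive.
Import Order.TTheory GRing.Theory Num.Theory.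
Local Open Scope ring_scope.

Definition dot3 {R : nzRingType} (a b : 'rV[R]_3) : R := (a *m b^T) 0 0.

(* The 2x4 matrix [ a^T  x ; b^T  y ] with a, b in R^3 and x, y scalars. *)
Definition mx24 {R : nzRingType} (a : 'rV[R]_3) (x : R) (b : 'rV[R]_3) (y : R)
  : 'M[R]_(2, 4) :=
  \matrix_(i < 2, j < 4)
    if i == 0 :> nat then (if (j < 3)%N then a 0 (inord j) else x)
    else (if (j < 3)%N then b 0 (inord j) else y).

Definition mx22 {R : nzRingType} (a b c d : R) : 'M[R]_2 :=
  \matrix_(i < 2, j < 2)
    if i == 0 :> nat then (if j == 0 :> nat then a else b)
    else (if j == 0 :> nat then c else d).

Definition K1 {R : fieldType} (v : R) : 'M[R]_2 := mx22 (v^-1) 0 0 1.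
Definition K2 {R : nzRingType} (f u : R) : 'M[R]_2 := mx22 f u 0 1.

Definition pushbroom_decomp {R : rcfType}
  (m1 m2 m3 : 'rV[R]_3) (t1 t2 t3 : R)
  (v f u : R) (r1 r2 r3 : 'rV[R]_3) (t1' t2' t3' c : R) : Prop :=
  [/\ [/\ 0 < v, 0 < f & 0 < c],
      [/\ dot3 r1 r1 = 1, dot3 r2 r2 = 1, dot3 r3 r3 = 1,
          dot3 r3 r1 = 0 & dot3 r3 r2 = 0],
      mx24 m1 t1 0 1 = K1 v *m mx24 r1 t1' 0 1 &
      mx24 m2 t2 m3 t3 = c *: (K2 f u *m mx24 r2 t2' r3 t3')].

(* Main.v *)
Require Import Defs.
From HB Require Import structures.
From mathcomp Require Import all_boot all_order all_algebra.
From mathcomp Require Import ring lra.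
Import Order.TTheory GRing.Theory Num.Theory.
Local Open Scope ring_scope.

Section S.
Variable R : rcfType.

Lemma mx22_mul_mx24 (a b c d : R) p x q y :
  mx22 a b c d *m mx24 p x q y =
  mx24 (a *: p + b *: q) (a * x + b * y) (c *: p + d *: q) (c * x + d * y).
Proof.
apply/matrixP=> i j; rewrite !mxE !big_ord_recl big_ord0 !mxE /=.
case: i => [[|[|i]] Hi] //=; case: j => [[|[|[|[|j]]]] Hj] //=; rewrite ?mxE; ring.
Qed.

Lemma scale_mx24 (k : R) p x q y :
  k *: mx24 p x q y = mx24 (k *: p) (k * x) (k *: q) (k * y).
Proof.
apply/matrixP=> i j; rewrite !mxE.
by case: i => [[|[|i]] Hi] //=; case: j => [[|[|[|[|j]]]] Hj] //=; rewrite ?mxE.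
Qed.

Lemma mx24_inj (p x q y p' x' q' y' : _) :
  mx24 p x q y = mx24 p' x' q' y' :> 'M[R]_(2,4) -> [/\ p = p', x = x', q = q' & y = y'].
Proof.
move=> E; split.
- apply/rowP=> k; have := congr1 (fun M : 'M_(2,4) => M 0 (widen_ord (isT : (3 <= 4)%N) k)) E.
  by rewrite !mxE /= ltn_ord inord_val.
- by have := congr1 (fun M : 'M_(2,4) => M 0 (@Ordinal 4 3 isT)) E; rewrite !mxE.
- apply/rowP=> k; have := congr1 (fun M : 'M_(2,4) => M (@Ordinal 2 1 isT) (widen_ord (isT : (3 <= 4)%N) k)) E.
  by rewrite !mxE /= ltn_ord inord_val.
- by have := congr1 (fun M : 'M_(2,4) => M (@Ordinal 2 1 isT) (@Ordinal 4 3 isT)) E; rewrite !mxE.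
Qed.

Lemma dot3E (a b : 'rV[R]_3) : dot3 a b = \sum_k a 0 k * b 0 k.
Proof. by rewrite /dot3 mxE; apply: eq_bigr => k _; rewrite mxE. Qed.

Lemma dot3C (a b : 'rV[R]_3) : dot3 a b = dot3 b a.
Proof. by rewrite !dot3E; apply: eq_bigr => k _; rewrite mulrC. Qed.

Lemma dot3Zl k (a b : 'rV[R]_3) : dot3 (k *: a) b = k * dot3 a b.
Proof. by rewrite !dot3E mulr_sumr; apply: eq_bigr => i _; rewrite mxE mulrA. Qed.

Lemma dot3Zr k (a b : 'rV[R]_3) : dot3 a (k *: b) = k * dot3 a b.
Proof. by rewrite dot3C dot3Zl dot3C. Qed.

Lemma dot3Dl (a b c : 'rV[R]_3) : dot3 (a + b) c = dot3 a c + dot3 b c.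
Proof. by rewrite !dot3E -big_split; apply: eq_bigr => i _; rewrite mxE mulrDl. Qed.

Lemma dot3Bl (a b c : 'rV[R]_3) : dot3 (a - b) c = dot3 a c - dot3 b c.
Proof. by rewrite dot3Dl -scaleN1r dot3Zl mulN1r. Qed.

Lemma dot3Dr (a b c : 'rV[R]_3) : dot3 c (a + b) = dot3 c a + dot3 c b.
Proof. by rewrite dot3C dot3Dl !(dot3C c). Qed.

Lemma dot3_ge0 (a : 'rV[R]_3) : 0 <= dot3 a a.
Proof. by rewrite dot3E; apply: sumr_ge0 => i _; rewrite -expr2 sqr_ge0. Qed.

Lemma dot3_eq0 (a : 'rV[R]_3) : dot3 a a = 0 -> a = 0.
Proof.
rewrite dot3E => /psumr_eq0P H; apply/rowP => k; rewrite mxE.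
by apply/eqP; rewrite -sqrf_eq0 expr2 H // => i _; rewrite -expr2 sqr_ge0.
Qed.

Definition N (a : 'rV[R]_3) := Num.sqrt (dot3 a a).

Lemma N_gt0 {a : 'rV[R]_3} : a != 0 -> 0 < N a.
Proof.
move=> a0; rewrite sqrtr_gt0 lt_def dot3_ge0 andbT.
by apply/eqP => /dot3_eq0 /eqP; apply/negP.
Qed.

Lemma N_sqr (a : 'rV[R]_3) : N a ^+ 2 = dot3 a a.
Proof. by rewrite sqr_sqrtr // dot3_ge0. Qed.

Lemma unit_normalize (a : 'rV[R]_3) : a != 0 -> dot3 ((N a)^-1 *: a) ((N a)^-1 *: a) = 1.
Proof.
move=> a0; have := @N_gt0 a a0; rewrite dot3Zl dot3Zr -N_sqr => h.
by field; rewrite gt_eqF.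
Qed.

Lemma unit_scale {k : R} {s m : 'rV[R]_3} : dot3 s s = 1 -> 0 < k -> m = k *: s ->
  k = N m /\ s = (N m)^-1 *: m.
Proof.
move=> s1 k0 ->; have e : N (k *: s) = k.
  by rewrite /N dot3Zl dot3Zr s1 mulr1 -expr2 sqrtr_sqr gtr0_norm.
rewrite e; split => //; rewrite scalerA mulVf ?scale1r // gt_eqF //.
Qed.

Lemma K1E (v : R) : K1 v = mx22 v^-1 0 0 1. Proof. by []. Qed.
Lemma K2E (f u : R) : K2 f u = mx22 f u 0 1. Proof. by []. Qed.


Lemma free2 (m2 m3 : 'rV[R]_3) a b : row_free (col_mx m2 m3) ->
  a *: m2 + b *: m3 = 0 -> a = 0 /\ b = 0.
Proof.
move=> rf E.
have : (row_mx (a%:M : 'M_1) (b%:M : 'M_1)) *m col_mx m2 m3 == 0.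
  by rewrite mul_row_col !mul_scalar_mx E.
rewrite mulmx_free_eq0 // row_mx_eq0 => /andP[/eqP Ha /eqP Hb].
split.
  by have := congr1 (fun M : 'M_1 => M 0 0) Ha; rewrite !mxE.
by have := congr1 (fun M : 'M_1 => M 0 0) Hb; rewrite !mxE.
Qed.

Theorem main_aux (m1 m2 m3 : 'rV[R]_3) (t1 t2 t3 : R) :
  m1 != 0 -> dot3 m1 m3 = 0 -> row_free (col_mx m2 m3) ->
  exists (v f u : R) (r1 r2 r3 : 'rV[R]_3) (t1' t2' t3' c : R),
    pushbroom_decomp m1 m2 m3 t1 t2 t3 v f u r1 r2 r3 t1' t2' t3' c /\
    forall (v0 f0 u0 : R) (s1 s2 s3 : 'rV[R]_3) (s1' s2' s3' c0 : R),
      pushbroom_decomp m1 m2 m3 t1 t2 t3 v0 f0 u0 s1 s2 s3 s1' s2' s3' c0 ->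
      [/\ v0 = v, f0 = f, u0 = u,
          [/\ s1 = r1, s2 = r2 & s3 = r3] &
          [/\ s1' = t1', s2' = t2', s3' = t3' & c0 = c]].
Proof.
move=> m10 d13 rf.
have m30 : m3 != 0.
  apply/eqP => E; have := @free2 m2 m3 0 1 rf.
  rewrite E scale0r scaler0 addr0 => /(_ erefl) [_ /eqP].
  by rewrite oner_eq0.
set c := N m3; have c0 : 0 < c := N_gt0 m30.
set r3 := c^-1 *: m3.
set u := dot3 m2 r3 / c.
set w := c^-1 *: m2 - u *: r3.
have w0 : w != 0.
  apply/eqP => E; have := @free2 m2 m3 c^-1 (- (u * c^-1)) rf.
  case.
    by rewrite -E /w /r3 scalerA scaleNr.
  by move=> /eqP; rewrite invr_eq0 gt_eqF.
set f := N w; have f0 : 0 < f := N_gt0 w0.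
set r2 := f^-1 *: w.
set v := (N m1)^-1; have v0 : 0 < v by rewrite invr_gt0 N_gt0.
set r1 := v *: m1.
have r33 : dot3 r3 r3 = 1 by exact: unit_normalize.
exists v, f, u, r1, r2, r3, (v * t1), ((t2 / c - u * (t3 / c)) / f), (t3 / c), c.
split.
  split.
  - by split.
  - split; first exact: unit_normalize.
    + exact: unit_normalize.
    + exact: r33.
    + by rewrite /r3 /r1 dot3Zl dot3Zr dot3C d13 !mulr0.
    + rewrite /r2 (dot3Zr f^-1 r3 w) /w (dot3C r3) dot3Bl (dot3Zl c^-1 m2 r3) (dot3Zl u r3 r3) r33 /u.
      by rewrite mulr1 [_ / c]mulrC subrr mulr0.
  - rewrite K1E mx22_mul_mx24; congr mx24.
    + by rewrite scaler0 addr0 /r1 scalerA mulVf ?scale1r // gt_eqF.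
    + by rewrite mul0r addr0 mulrA mulVf ?mul1r // gt_eqF.
    + by rewrite scale0r scaler0 addr0.
    + by rewrite mul0r mul1r add0r.
  - rewrite K2E mx22_mul_mx24 scale_mx24; congr mx24.
    + rewrite /r2 scalerA mulfV ?gt_eqF // scale1r /w subrK scalerA mulfV ?gt_eqF //.
      by rewrite scale1r.
    + by field; rewrite !gt_eqF.
    + by rewrite scale0r add0r scale1r /r3 scalerA mulfV ?scale1r // gt_eqF.
    + by rewrite mul0r add0r mul1r mulrC divfK // gt_eqF.
move=> v' f' u' s1 s2 s3 s1' s2' s3' c'.
case=> [[v'0 f'0 c'0] [s11 s22 s33 s31 s32]].
rewrite K1E mx22_mul_mx24 => /mx24_inj [E1 Et1 _ _].
rewrite K2E mx22_mul_mx24 scale_mx24 => /mx24_inj [E2 Et2 E3 Et3].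
rewrite scaler0 addr0 in E1; rewrite mul0r addr0 in Et1.
rewrite scale0r add0r scale1r in E3; rewrite mul0r add0r mul1r in Et3.
have [hc hs3] := unit_scale s33 c'0 E3.
have [hv hs1] : v'^-1 = N m1 /\ s1 = (N m1)^-1 *: m1.
  by apply: unit_scale; rewrite ?invr_gt0.
have hv' : v' = v by rewrite /v -hv invrK.
have e3 : s3 = r3 := hs3.
have ec : c' = c := hc.
clear hs3 hc; subst s3 c'.
have hu : u' = u.
  have H := congr1 (fun x => dot3 x r3) E2; simpl in H.
  have s23 : dot3 s2 r3 = 0 by rewrite dot3C.
  rewrite (dot3Zl c) dot3Dl (dot3Zl f') (dot3Zl u') s23 r33 mulr0 add0r mulr1 in H.
  by rewrite /u H mulrC mulKf // gt_eqF.
have Ew : w = f' *: s2.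
  by rewrite /w E2 (scalerA c^-1 c) mulVf ?gt_eqF // scale1r hu addrK.
have [hf hs2] := unit_scale s22 f'0 Ew.
have ht3 : s3' = t3 / c by rewrite Et3 mulrC mulKf // gt_eqF.
have ht2 : t2 / c = f' * s2' + u' * s3' by rewrite Et2 mulrC mulKf // gt_eqF.
split => //; split => //.
- by rewrite Et1 hv' mulrA mulfV ?mul1r // gt_eqF.
- by rewrite ht2 -ht3 hu addrK hf -/f mulrC mulKf // gt_eqF.
Qed.
End S.

Theorem mainTheorem3 (R : rcfType) (m1 m2 m3 : 'rV[R]_3) (t1 t2 t3 : R) :
  m1 != 0 -> dot3 m1 m3 = 0 -> row_free (col_mx m2 m3) ->
  exists (v f u : R) (r1 r2 r3 : 'rV[R]_3) (t1' t2' t3' c : R),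
    pushbroom_decomp m1 m2 m3 t1 t2 t3 v f u r1 r2 r3 t1' t2' t3' c /\
    forall (v0 f0 u0 : R) (s1 s2 s3 : 'rV[R]_3) (s1' s2' s3' c0 : R),
      pushbroom_decomp m1 m2 m3 t1 t2 t3 v0 f0 u0 s1 s2 s3 s1' s2' s3' c0 ->
      [/\ v0 = v, f0 = f, u0 = u,
          [/\ s1 = r1, s2 = r2 & s3 = r3] &
          [/\ s1' = t1', s2' = t2', s3' = t3' & c0 = c]].
Proof. exact: main_aux. Qed.
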